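(* Let $\lambda\in(0,1)$. A nonconstant meromorphic solution $\partial$ of the differential equation $9\,\partial^2(\partial')^2=2(1-\partial^2)(4\partial^3-3\partial+1-2\lambda^2)$ can have no zeros.
   Context: Here $\partial$ denotes an unknown meromorphic function of a complex variable (on a connected open subset of $\mathbb{C}$), not an operator; $\partial'$ is its derivative. *)

(* Defs.v *)
From Stdlib Require Import Reals.
From Coquelicot Require Export Coquelicot.
Open Scope R_scope.

Definition connected_set (U : C -> Prop) : Prop :=
  forall A B : C -> Prop, open A -> open B ->
    (forall z, U z -> A z \/ B z) ->
    (forall z, U z -> A z -> B z -> False) ->
    (forall z, U z -> A z) \/ (forall z, U z -> B z).

Definition is_domain (U : C -> Prop) : Prop :=
  open U /\ connected_set U /\ exists z, U z.

Definition meromorphic_on (U : C -> Prop) (P : C -> Prop) (f : C -> C) : Prop :=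
  (forall p, P p -> U p) /\
  (forall z, U z -> exists eps : R, 0 < eps /\
       forall w, Cmod (Cminus w z) < eps -> P w -> w = z) /\
  (forall z, U z -> ~ P z -> ex_derive (K := C_AbsRing) (V := C_NormedModule) f z) /\
  (forall p, P p -> filterlim (fun w => Cmod (f w)) (locally' p) (Rbar_locally p_infty)).

(* Main.v *)
Require Import Defs.
From Stdlib Require Import Reals.
From Coquelicot Require Import Coquelicot.
From Stdlib Require Import Lra Psatz List Classical ClassicalEpsilon.
Open Scope R_scope.

Lemma Cmod_le_sum (c : C) : Cmod c <= Rabs (fst c) + Rabs (snd c).
Proof.
  apply Rsqr_incr_0_var.
  - unfold Rsqr. rewrite <- (Rmult_1_r (Cmod c)) at 1.
    replace (Cmod c * 1 * Cmod c) with (Cmod c ^ 2) by ring.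
    rewrite Cmod2_alt. unfold Re, Im.
    assert (H1 := Rabs_pos (fst c)); assert (H2 := Rabs_pos (snd c)).
    rewrite <- (pow2_abs (fst c)), <- (pow2_abs (snd c)). nra.
  - assert (H1 := Rabs_pos (fst c)); assert (H2 := Rabs_pos (snd c)). lra.
Qed.

Lemma Cmod_fst (c : C) : Rabs (fst c) <= Cmod c.
Proof. apply re_le_Cmod. Qed.

Lemma Cmod_snd (c : C) : Rabs (snd c) <= Cmod c.
Proof. assert (H := Rmax_Cmod c). eapply Rle_trans; [apply Rmax_r|exact H]. Qed.

Lemma Cmod_sub_tri (a b c : C) : Cmod (Cminus a c) <= Cmod (Cminus a b) + Cmod (Cminus b c).
Proof.
  replace (Cminus a c) with (Cplus (Cminus a b) (Cminus b c)) by ring.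
  apply Cmod_triangle.
Qed.

Lemma Cmod_sym (a b : C) : Cmod (Cminus a b) = Cmod (Cminus b a).
Proof.
  replace (Cminus a b) with (Copp (Cminus b a)) by ring. apply Cmod_opp.
Qed.

Lemma Cmod_rev_tri (a b : C) : Cmod a - Cmod b <= Cmod (Cminus a b).
Proof.
  assert (H := Cmod_triangle (Cminus a b) b).
  replace (Cplus (Cminus a b) b) with a in H by ring. lra.
Qed.

Lemma deriv_eps (f : C -> C) z d : is_derive (K := C_AbsRing) (V := C_NormedModule) f z d ->
  forall eps, 0 < eps -> exists del, 0 < del /\ forall w, Cmod (Cminus w z) < del ->
  Cmod (Cminus (Cminus (f w) (f z)) (Cmult (Cminus w z) d)) <= eps * Cmod (Cminus w z).
Proof.
intros [_ H] eps Heps.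
specialize (H z (fun P HP => HP) (mkposreal eps Heps)).
destruct H as [del Hdel].
exists del. split. apply cond_pos.
intros w Hw. apply Hdel. exact Hw.
Qed.

Lemma deriv_lip (f : C -> C) z d : is_derive (K := C_AbsRing) (V := C_NormedModule) f z d ->
  exists del, 0 < del /\ forall w, Cmod (Cminus w z) < del ->
  Cmod (Cminus (f w) (f z)) <= (Cmod d + 1) * Cmod (Cminus w z).
Proof.
  intros H. destruct (deriv_eps f z d H 1 Rlt_0_1) as [del [Hd Hw]].
  exists del; split; auto. intros w Hw'. specialize (Hw w Hw').
  assert (T := Cmod_triangle (Cminus (Cminus (f w) (f z)) (Cmult (Cminus w z) d)) (Cmult (Cminus w z) d)).
  replace (Cplus (Cminus (Cminus (f w) (f z)) (Cmult (Cminus w z) d)) (Cmult (Cminus w z) d))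
    with (Cminus (f w) (f z)) in T by ring.
  rewrite Cmod_mult in T. nra.
Qed.

Lemma open_Cmod (A : C -> Prop) z : open A -> A z ->
  exists e, 0 < e /\ forall w, Cmod (Cminus w z) < e -> A w.
Proof.
  intros HA Hz. destruct (HA z Hz) as [e He].
  exists e. split. apply cond_pos. intros w Hw. apply He.
  split; simpl.
  - eapply Rle_lt_trans; [|exact Hw]. apply (Cmod_fst (Cminus w z)).
  - eapply Rle_lt_trans; [|exact Hw]. apply (Cmod_snd (Cminus w z)).
Qed.

Lemma open_nbhd (Q : C -> Prop) :
  open (fun z => exists e, 0 < e /\ forall w, Cmod (Cminus w z) < e -> Q w).
Proof.
  intros z [e [He Hw]].
  assert (He4 : 0 < e / 4) by lra.
  exists (mkposreal _ He4). intros y Hy. unfold ball in Hy; simpl in Hy; unfold prod_ball in Hy; destruct Hy as [Hy1 Hy2]; simpl in Hy1, Hy2. unfold ball in Hy1, Hy2; simpl in Hy1, Hy2; unfold AbsRing_ball in Hy1, Hy2; simpl in Hy1, Hy2. change (Rabs (fst y - fst z) < e/4) in Hy1. change (Rabs (snd y - snd z) < e/4) in Hy2.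
  exists (e / 2). split; [lra|]. intros w Hwy. apply Hw.
  assert (T := Cmod_sub_tri w y z).
  assert (T2 := Cmod_le_sum (Cminus y z)).
  assert (E1 : fst (Cminus y z) = fst y - fst z) by (simpl; ring).
  assert (E2 : snd (Cminus y z) = snd y - snd z) by (simpl; ring).
  rewrite E1, E2 in T2. lra.
Qed.

Definition inbox (a b c d : R) (w : C) : Prop := a <= fst w <= b /\ c <= snd w <= d.

Lemma cover (g h : C -> R) a b c d :
  (forall t, inbox a b c d t -> exists del, 0 < del /\
     forall w, inbox a b c d w -> Cmod (Cminus w t) < del -> g w < h t) ->
  exists l : list C, forall w, inbox a b c d w ->
     exists t, In t l /\ inbox a b c d t /\ g w < h t.
Proof.
  intros H.
  assert (Hd : forall t : Compactness.Tn 2 R, {dl : posreal |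
     inbox a b c d (fst t, fst (snd t)) -> forall w, inbox a b c d w ->
     Cmod (Cminus w (fst t, fst (snd t))) < 2 * dl -> g w < h (fst t, fst (snd t))}).
  { intro t. apply constructive_indefinite_description.
    destruct (classic (inbox a b c d (fst t, fst (snd t)))) as [Hi|Hn].
    - destruct (H _ Hi) as [del [Hdel Hw]].
      assert (Hdel2 : 0 < del / 2) by lra.
      exists (mkposreal _ Hdel2). intros _ w Hw' Hc. apply Hw; auto. simpl in Hc. lra.
    - exists (mkposreal 1 Rlt_0_1). intro; contradiction. }
  set (delta := fun t => proj1_sig (Hd t)).
  pose proof (compactness_list 2 (a,(c,tt)) (b,(d,tt)) delta) as HL.
  apply NNPP in HL. destruct HL as [l Hl].
  exists (map (fun t : Compactness.Tn 2 R => (fst t, fst (snd t)) : C) l).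
  intros w Hw.
  destruct (Hl (fst w, (snd w, tt))) as [t [Hin [Hb Hc]]].
  { simpl. unfold inbox in Hw. tauto. }
  exists (fst t, fst (snd t)). split; [|split].
  - apply in_map_iff. exists t. auto.
  - destruct t as [t1 [t2 []]]. simpl in Hb |- *. unfold inbox; simpl. tauto.
  - apply (proj2_sig (Hd t)).
    + destruct t as [t1 [t2 []]]. simpl in Hb |- *. unfold inbox; simpl. tauto.
    + exact Hw.
    + fold (delta t). destruct t as [t1 [t2 []]]. simpl in Hc. destruct Hc as [Hc1 [Hc2 _]].
      eapply Rle_lt_trans. apply Cmod_le_sum.
      assert (E1 : fst (Cminus w (t1, t2)) = fst w - t1) by (simpl; ring).
      assert (E2 : snd (Cminus w (t1, t2)) = snd w - t2) by (simpl; ring).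
      change (fst [t1, t2]) with t1. change (fst (snd [t1, t2])) with t2. rewrite E1, E2. apply Rlt_le_trans with (2 * delta [t1, t2]); [lra | right; reflexivity].
Qed.

Lemma list_bound (h : C -> R) (l : list C) : exists M, forall t, In t l -> h t <= M.
Proof.
  induction l as [|x l [M HM]].
  - exists 0. intros t [].
  - exists (Rmax M (h x)). intros t [<-|Ht].
    + apply Rmax_r.
    + eapply Rle_trans; [apply HM; auto | apply Rmax_l].
Qed.

Lemma list_max (P : C -> Prop) (h : C -> R) S (l : list C) :
  (forall t, P t -> h t < S) -> exists M, M < S /\ forall t, In t l -> P t -> h t <= M.
Proof.
  intros HP. induction l as [|x l [M [HMS HM]]].
  - exists (S - 1). split; [lra|]. intros t [].
  - destruct (classic (P x)) as [Hx|Hx].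
    + exists (Rmax M (h x)). split.
      * apply Rmax_lub_lt; auto.
      * intros t [<-|Ht] Pt; [apply Rmax_r|]. eapply Rle_trans; [apply HM; auto|apply Rmax_l].
    + exists M. split; auto. intros t [<-|Ht] Pt; [contradiction|auto].
Qed.

Lemma EVT2 (g : C -> R) a b c d : a <= b -> c <= d ->
  (forall w, inbox a b c d w -> forall eps, 0 < eps -> exists del, 0 < del /\
     forall w', inbox a b c d w' -> Cmod (Cminus w' w) < del -> Rabs (g w' - g w) < eps) ->
  exists w, inbox a b c d w /\ forall w', inbox a b c d w' -> g w' <= g w.
Proof.
  intros Hab Hcd Hc.
  destruct (cover g (fun t => g t + 1) a b c d) as [l Hl].
  { intros t Ht. destruct (Hc t Ht 1 Rlt_0_1) as [del [Hdel Hw]]. exists del. split; auto.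
    intros w Hw1 Hw2. specialize (Hw w Hw1 Hw2). apply Rabs_def2 in Hw. lra. }
  destruct (list_bound (fun t => g t + 1) l) as [M HM].
  set (E := fun x => exists w, inbox a b c d w /\ x = g w).
  assert (Hb : bound E).
  { exists M. intros x [w [Hw ->]]. destruct (Hl w Hw) as [t [Hin [_ Hlt]]].
    specialize (HM t Hin). simpl in HM. lra. }
  assert (Hne : exists x, E x).
  { exists (g (a, c)). exists (a, c). split; auto. unfold inbox; simpl; lra. }
  destruct (completeness E Hb Hne) as [S [HS1 HS2]].
  apply NNPP; intro Hno.
  assert (Hlt : forall w, inbox a b c d w -> g w < S).
  { intros w Hw. assert (g w <= S) by (apply HS1; exists w; auto).
    destruct (Req_dec (g w) S) as [Heq|Hne']; [|lra].
    exfalso. apply Hno. exists w. split; auto. intros w' Hw'. rewrite Heq. apply HS1. exists w'. auto. }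
  destruct (cover g (fun t => (g t + S) / 2) a b c d) as [l2 Hl2].
  { intros t Ht. assert (Hp : 0 < (S - g t) / 2) by (specialize (Hlt t Ht); lra).
    destruct (Hc t Ht _ Hp) as [del [Hdel Hw]]. exists del. split; auto.
    intros w Hw1 Hw2. specialize (Hw w Hw1 Hw2). apply Rabs_def2 in Hw. lra. }
  destruct (list_max (inbox a b c d) (fun t => (g t + S) / 2) S l2) as [M2 [HM2 HM2']].
  { intros t Ht. specialize (Hlt t Ht). lra. }
  assert (S <= M2).
  { apply HS2. intros x [w [Hw ->]]. destruct (Hl2 w Hw) as [t [Hin [Hti Hg]]].
    specialize (HM2' t Hin Hti). simpl in HM2'. lra. }
  lra.
Qed.

Definition phi (x : R) : R := x * sqrt x.

Lemma phi_conv x y : 0 <= x <= y -> phi x + (3/2) * sqrt x * (y - x) <= phi y.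
Proof.
  intros [Hx Hxy]. unfold phi.
  assert (Hp := sqrt_pos x). assert (Hq := sqrt_pos y).
  assert (Hpq : sqrt x <= sqrt y) by (apply sqrt_le_1_alt; lra).
  assert (Ex := sqrt_sqrt x Hx). assert (Ey := sqrt_sqrt y (Rle_trans _ _ _ Hx Hxy)).
  set (p := sqrt x) in *. set (q := sqrt y) in *.
  rewrite <- Ex, <- Ey.
  assert (0 <= (q - p) * (q - p) * (q + p / 2)) by (apply Rmult_le_pos; [nra|lra]).
  nra.
Qed.

Lemma phi_pos x : 0 < x -> 0 < phi x.
Proof. intros. unfold phi. apply Rmult_lt_0_compat; auto. apply sqrt_lt_R0; auto. Qed.

Lemma phi_0 : phi 0 = 0.
Proof. unfold phi. ring. Qed.

Lemma phi_sq x : 0 <= x -> phi x * phi x = x ^ 3.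
Proof. intros. unfold phi. replace (x * sqrt x * (x * sqrt x)) with (x * x * (sqrt x * sqrt x)) by ring.
  rewrite sqrt_sqrt; auto. ring. Qed.

Lemma phi_lip x y : 0 <= x <= 1 -> 0 <= y <= 1 -> Rabs (phi x - phi y) <= 2 * Rabs (x - y).
Proof.
  intros Hx Hy. unfold phi.
  assert (Hp := sqrt_pos x). assert (Hq := sqrt_pos y).
  assert (Hp1 : sqrt x <= 1) by (rewrite <- sqrt_1; apply sqrt_le_1_alt; lra).
  assert (Hq1 : sqrt y <= 1) by (rewrite <- sqrt_1; apply sqrt_le_1_alt; lra).
  assert (Ex := sqrt_sqrt x (proj1 Hx)). assert (Ey := sqrt_sqrt y (proj1 Hy)).
  set (p := sqrt x) in *. set (q := sqrt y) in *.
  rewrite <- Ex, <- Ey.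
  replace (p * p * p - q * q * q) with ((p - q) * (p * p + p * q + q * q)) by ring.
  replace (p * p - q * q) with ((p - q) * (p + q)) by ring.
  rewrite !Rabs_mult. rewrite (Rabs_right (p * p + p * q + q * q)) by nra.
  rewrite (Rabs_right (p + q)) by nra.
  assert (Ha := Rabs_pos (p - q)).
  assert (p * p + p * q + q * q <= 2 * (p + q)) by nra.
  nra.
Qed.

Lemma Cmod_diff_abs (a b : C) : Rabs (Cmod a - Cmod b) <= Cmod (Cminus a b).
Proof.
  apply Rabs_le. split.
  - assert (H := Cmod_rev_tri b a). rewrite Cmod_sym in H. lra.
  - apply Cmod_rev_tri.
Qed.

Lemma fst_sub (a b : C) : fst (Cminus a b) = fst a - fst b.
Proof. simpl. ring. Qed.
Lemma snd_sub (a b : C) : snd (Cminus a b) = snd a - snd b.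
Proof. simpl. ring. Qed.

Lemma core (f : C -> C) (z0 : C) (r0 C0 : R) :
  0 < r0 -> 0 < C0 ->
  (forall w, Cmod (Cminus w z0) < r0 -> exists d,
     is_derive (K := C_AbsRing) (V := C_NormedModule) f w d /\
     (f w <> RtoC 0 -> 1/3 <= Cmod (f w) * (Cmod d * Cmod d))) ->
  (forall w, Cmod (Cminus w z0) < r0 -> Cmod (f w) <= C0 * Cmod (Cminus w z0)) ->
  (forall w, Cmod (Cminus w z0) < r0 -> Cmod (f w) <= 1) ->
  exists r, 0 < r /\ forall w, Cmod (Cminus w z0) < r -> f w = RtoC 0.
Proof.
  intros Hr0 HC0 Hder Hbd H1.
  assert (HC3 : 0 < C0 ^ 3) by (apply pow_lt; lra).
  set (rho := Rmin (r0/4) (1/(300*C0^3))).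
  assert (Hrho : 0 < rho).
  { unfold rho; apply Rmin_pos; [lra|]. apply Rdiv_lt_0_compat; lra. }
  assert (Hrho1 : rho <= r0/4) by apply Rmin_l.
  assert (Hrho2 : rho * (300 * C0^3) <= 1).
  { assert (rho <= 1/(300*C0^3)) by apply Rmin_r.
    apply Rmult_le_compat_r with (r := 300 * C0^3) in H; [|lra].
    replace (1 / (300 * C0 ^ 3) * (300 * C0 ^ 3)) with 1 in H by (field; lra). exact H. }
  exists (rho/2). split; [lra|]. intros w1 Hw1. apply NNPP; intro Hf1.
  set (x0 := fst z0). set (y0 := snd z0).
  assert (Hin : forall w, inbox (x0-rho) (x0+rho) (y0-rho) (y0+rho) w ->
                  Cmod (Cminus w z0) <= 2*rho).
  { intros w [[Ha Hb] [Hc Hd]]. eapply Rle_trans; [apply Cmod_le_sum|].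
    rewrite fst_sub, snd_sub. fold x0 y0.
    assert (Rabs (fst w - x0) <= rho) by (apply Rabs_le; lra).
    assert (Rabs (snd w - y0) <= rho) by (apply Rabs_le; lra). lra. }
  set (psi := fun w => phi (Cmod (f w)) - (1/3) * Cmod (Cminus w w1)).
  assert (Hcont : forall w, inbox (x0-rho) (x0+rho) (y0-rho) (y0+rho) w ->
     forall eps, 0 < eps -> exists del, 0 < del /\
     forall w', inbox (x0-rho) (x0+rho) (y0-rho) (y0+rho) w' ->
       Cmod (Cminus w' w) < del -> Rabs (psi w' - psi w) < eps).
  { intros w Hw eps Heps.
    assert (Hw0 : Cmod (Cminus w z0) < r0) by (specialize (Hin w Hw); lra).
    destruct (Hder w Hw0) as [d [Hd _]].
    destruct (deriv_lip f w d Hd) as [del [Hdel Hl]].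
    assert (HD := Cmod_ge_0 d).
    exists (Rmin del (eps / (2 * Cmod d + 3))). split.
    { apply Rmin_pos; auto. apply Rdiv_lt_0_compat; lra. }
    intros w' Hw' Hww.
    assert (Hww1 : Cmod (Cminus w' w) < del) by (eapply Rlt_le_trans; [exact Hww| apply Rmin_l]).
    assert (Hww2 : Cmod (Cminus w' w) < eps / (2 * Cmod d + 3))
      by (eapply Rlt_le_trans; [exact Hww| apply Rmin_r]).
    specialize (Hl w' Hww1).
    assert (Hw'0 : Cmod (Cminus w' z0) < r0) by (specialize (Hin w' Hw'); lra).
    assert (P1 := phi_lip (Cmod (f w')) (Cmod (f w)) (conj (Cmod_ge_0 _) (H1 w' Hw'0))
                     (conj (Cmod_ge_0 _) (H1 w Hw0))).
    assert (P2 := Cmod_diff_abs (f w') (f w)).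
    assert (P3 := Cmod_diff_abs (Cminus w' w1) (Cminus w w1)).
    replace (Cminus (Cminus w' w1) (Cminus w w1)) with (Cminus w' w) in P3 by ring.
    unfold psi.
    replace (phi (Cmod (f w')) - 1 / 3 * Cmod (Cminus w' w1) - (phi (Cmod (f w)) - 1 / 3 * Cmod (Cminus w w1)))
      with ((phi (Cmod (f w')) - phi (Cmod (f w))) + (-(1/3)) * (Cmod (Cminus w' w1) - Cmod (Cminus w w1))) by ring.
    eapply Rle_lt_trans; [apply Rabs_triang|]. rewrite Rabs_mult.
    rewrite (Rabs_left (-(1/3))) by lra.
    assert (Hx : Cmod (Cminus w' w) * (2 * Cmod d + 3) < eps).
    { apply Rmult_lt_compat_r with (r := 2 * Cmod d + 3) in Hww2; [|lra].
      replace (eps / (2 * Cmod d + 3) * (2 * Cmod d + 3)) with eps in Hww2 by (field; lra). exact Hww2. }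
    assert (HC := Cmod_ge_0 (Cminus w' w)).
    nra. }
  destruct (EVT2 psi (x0-rho) (x0+rho) (y0-rho) (y0+rho)) as [ws [Hws Hmax]]; [lra|lra|exact Hcont|].
  assert (Hw1x : Rabs (fst w1 - x0) < rho/2).
  { replace (fst w1 - x0) with (fst (Cminus w1 z0)) by (unfold x0; simpl; ring). eapply Rle_lt_trans; [apply Cmod_fst|exact Hw1]. }
  assert (Hw1y : Rabs (snd w1 - y0) < rho/2).
  { replace (snd w1 - y0) with (snd (Cminus w1 z0)) by (unfold y0; simpl; ring). eapply Rle_lt_trans; [apply Cmod_snd|exact Hw1]. }
  assert (Hw1box : inbox (x0-rho) (x0+rho) (y0-rho) (y0+rho) w1).
  { apply Rabs_def2 in Hw1x. apply Rabs_def2 in Hw1y. unfold inbox. lra. }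
  assert (Hge := Hmax w1 Hw1box). unfold psi in Hge.
  replace (Cminus w1 w1) with (RtoC 0) in Hge by ring. rewrite Cmod_0 in Hge.
  assert (Hpos : 0 < phi (Cmod (f w1))) by (apply phi_pos; apply Cmod_gt_0; auto).
  assert (Hws0 : Cmod (Cminus ws z0) < r0) by (specialize (Hin ws Hws); lra).
  assert (Hdw := Cmod_ge_0 (Cminus ws w1)).
  assert (Hfs : f ws <> RtoC 0).
  { intro E. rewrite E, Cmod_0, phi_0 in Hge. lra. }
  destruct (classic (x0 - rho < fst ws < x0 + rho /\ y0 - rho < snd ws < y0 + rho)) as [Hint|Hbd'].
  -
    destruct (Hder ws Hws0) as [d [Hd Hlow]]. specialize (Hlow Hfs).
    set (Fs := Cmod (f ws)) in *. set (D := Cmod d) in *.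
    assert (HFs : 0 < Fs) by (apply Cmod_gt_0; auto).
    assert (HD0 : 0 <= D) by apply Cmod_ge_0.
    assert (HD : 0 < D).
    { destruct (Req_dec D 0) as [E|E]; [rewrite E in Hlow; lra|lra]. }
    assert (Hd0 : d <> RtoC 0) by (intro E; unfold D in HD; rewrite E, Cmod_0 in HD; lra).
    set (k := D / Fs).
    assert (Hk : 0 < k) by (apply Rdiv_lt_0_compat; auto).
    set (u := Cmult (RtoC k) (Cdiv (f ws) d)).
    assert (Hu : Cmod u = 1).
    { unfold u. rewrite Cmod_mult, Cmod_R, Cmod_div by auto. rewrite Rabs_right by lra.
      fold Fs D. unfold k. field. split; lra. }
    assert (Hdu : Cmult d u = Cmult (RtoC k) (f ws)) by (unfold u; field; auto).
    destruct (deriv_eps f ws d Hd (D/2)) as [del [Hdel He]]; [lra|].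
    set (m := Rmin (Rmin (x0+rho - fst ws) (fst ws - (x0-rho))) (Rmin (y0+rho - snd ws) (snd ws - (y0 - rho)))).
    assert (Hm : 0 < m) by (unfold m; repeat apply Rmin_pos; lra).
    assert (Hm1 : m <= x0+rho - fst ws) by (unfold m; eapply Rle_trans; [apply Rmin_l|apply Rmin_l]).
    assert (Hm2 : m <= fst ws - (x0-rho)) by (unfold m; eapply Rle_trans; [apply Rmin_l|apply Rmin_r]).
    assert (Hm3 : m <= y0+rho - snd ws) by (unfold m; eapply Rle_trans; [apply Rmin_r|apply Rmin_l]).
    assert (Hm4 : m <= snd ws - (y0-rho)) by (unfold m; eapply Rle_trans; [apply Rmin_r|apply Rmin_r]).
    set (s := Rmin del m / 2).
    assert (Hs : 0 < s) by (unfold s; assert (0 < Rmin del m) by (apply Rmin_pos; auto); lra).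
    assert (Hsd : s < del) by (unfold s; assert (Rmin del m <= del) by apply Rmin_l; lra).
    assert (Hsm : s < m) by (unfold s; assert (Rmin del m <= m) by apply Rmin_r; lra).
    set (w := Cplus ws (Cmult (RtoC s) u)).
    assert (Hwws : Cminus w ws = Cmult (RtoC s) u) by (unfold w; ring).
    assert (Hdist : Cmod (Cminus w ws) = s).
    { rewrite Hwws, Cmod_mult, Cmod_R, Hu, Rabs_right; lra. }
    assert (Hwbox : inbox (x0-rho) (x0+rho) (y0-rho) (y0+rho) w).
    { assert (Q1 := Cmod_fst (Cminus w ws)). assert (Q2 := Cmod_snd (Cminus w ws)).
      rewrite fst_sub, Hdist in Q1. rewrite snd_sub, Hdist in Q2.
      apply Rabs_le_between in Q1. apply Rabs_le_between in Q2. unfold inbox. lra. }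
    specialize (He w (ltac:(rewrite Hdist; exact Hsd))). rewrite Hdist in He.
    set (e := Cminus (Cminus (f w) (f ws)) (Cmult (Cminus w ws) d)) in *.
    set (A := Cmult (f ws) (RtoC (1 + s * k))).
    assert (HA : Cminus A (f w) = Copp e).
    { unfold A, e. rewrite Hwws. rewrite RtoC_plus, RtoC_mult.
      replace (Cmult (Cmult (RtoC s) u) d) with (Cmult (RtoC s) (Cmult d u)) by ring.
      rewrite Hdu. ring. }
    assert (HAmod : Cmod A = Fs + s * D).
    { unfold A. rewrite Cmod_mult, Cmod_R, Rabs_right by nra. fold Fs. unfold k. field. lra. }
    assert (Hfw : Fs + s * D / 2 <= Cmod (f w)).
    { assert (T := Cmod_rev_tri A (f w)). rewrite HA, Cmod_opp, HAmod in T. lra. }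
    assert (Hle : Fs <= Cmod (f w)) by nra.
    assert (Hconv := phi_conv Fs (Cmod (f w)) (conj (Rlt_le _ _ HFs) Hle)).
    assert (HsF := sqrt_pos Fs).
    assert (HX : 0.55 <= sqrt Fs * D).
    { assert (E : (sqrt Fs * D) * (sqrt Fs * D) = Fs * (D * D)).
      { replace ((sqrt Fs * D) * (sqrt Fs * D)) with ((sqrt Fs * sqrt Fs) * (D * D)) by ring.
        rewrite sqrt_sqrt; lra. }
      assert (0 <= sqrt Fs * D) by nra. nra. }
    assert (Hmw := Hmax w Hwbox). unfold psi in Hmw. fold Fs in Hmw.
    assert (Htri := Cmod_sub_tri w ws w1). rewrite Hdist in Htri.
    assert (Hgain : 3/2 * sqrt Fs * (s * D / 2) <= 3/2 * sqrt Fs * (Cmod (f w) - Fs)).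
    { apply Rmult_le_compat_l; nra. }
    assert (Hgain2 : 3/4 * s * 0.55 <= 3/2 * sqrt Fs * (s * D / 2)).
    { assert (E2 : 3/2 * sqrt Fs * (s * D / 2) = 3/4 * s * (sqrt Fs * D)) by (field).
      rewrite E2. apply Rmult_le_compat_l; nra. }
    lra.
  -
    assert (Hfar : rho/2 < Cmod (Cminus ws w1)).
    { apply Rnot_le_lt. intro Hle. apply Hbd'.
      assert (Q1 := Cmod_fst (Cminus ws w1)). assert (Q2 := Cmod_snd (Cminus ws w1)).
      rewrite fst_sub in Q1. rewrite snd_sub in Q2.
      apply Rabs_def2 in Hw1x. apply Rabs_def2 in Hw1y.
      assert (Rabs (fst ws - fst w1) <= rho/2) by lra.
      assert (Rabs (snd ws - snd w1) <= rho/2) by lra.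
      apply Rabs_le_between in H. apply Rabs_le_between in H0. lra. }
    set (F := Cmod (f ws)).
    assert (HF0 : 0 <= F) by apply Cmod_ge_0.
    assert (Hphi : rho / 6 < phi F) by (unfold F; lra).
    assert (Hsq : rho / 6 * (rho / 6) < F ^ 3).
    { rewrite <- phi_sq by auto. apply Rmult_le_0_lt_compat; lra. }
    assert (HF : F <= 2 * C0 * rho).
    { unfold F. eapply Rle_trans; [apply Hbd; auto|]. specialize (Hin ws Hws). nra. }
    assert (HF3 : F ^ 3 <= (2 * C0 * rho) ^ 3) by (apply pow_incr; lra).
    replace ((2 * C0 * rho) ^ 3) with (8 * rho * rho * (rho * C0 ^ 3)) in HF3 by ring.
    assert (rho * C0 ^ 3 <= 1/300) by lra.
    assert (8 * rho * rho * (rho * C0 ^ 3) <= 8 * rho * rho * (1/300)).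
    { apply Rmult_le_compat_l; [nra|lra]. }
    nra.
Qed.

Lemma ode_bound (F d : C) : F <> RtoC 0 -> Cmod F <= 1/2 ->
  Cmult (RtoC 9) (Cmult (Cmult F F) (Cmult d d)) =
     Cmult (RtoC 2)
       (Cmult (Cminus (RtoC 1) (Cmult F F))
          (Cplus (Cminus (Cmult (RtoC 4) (Cmult F (Cmult F F)))
                         (Cmult (RtoC 3) F))
                 (RtoC 0))) ->
  1/3 <= Cmod F * (Cmod d * Cmod d).
Proof.
  intros HF HF2 Heq.
  assert (E2 : Cmult (RtoC 9) (Cmult F (Cmult d d)) =
               Cmult (RtoC 2) (Cmult (Cminus (RtoC 1) (Cmult F F))
                                     (Cminus (Cmult (RtoC 4) (Cmult F F)) (RtoC 3)))).
  { transitivity (Cmult (Cinv F) (Cmult (RtoC 9) (Cmult (Cmult F F) (Cmult d d)))).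
    { field. auto. }
    rewrite Heq. field. auto. }
  apply (f_equal Cmod) in E2.
  rewrite !Cmod_mult, !Cmod_R in E2.
  rewrite (Rabs_right 9) in E2 by lra. rewrite (Rabs_right 2) in E2 by lra.
  assert (T1 := Cmod_rev_tri (RtoC 1) (Cmult F F)).
  rewrite Cmod_1, Cmod_mult in T1.
  assert (T2 := Cmod_rev_tri (RtoC 3) (Cmult (RtoC 4) (Cmult F F))).
  rewrite Cmod_sym, !Cmod_mult, !Cmod_R in T2.
  rewrite (Rabs_right 3) in T2 by lra. rewrite (Rabs_right 4) in T2 by lra.
  assert (H0 := Cmod_ge_0 F). assert (H1 := Cmod_ge_0 d).
  set (x := Cmod F) in *. set (y := Cmod d) in *.
  set (p := Cmod (Cminus (RtoC 1) (Cmult F F))) in *.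
  set (q := Cmod (Cminus (Cmult (RtoC 4) (Cmult F F)) (RtoC 3))) in *.
  assert (Hp : 3/4 <= p) by nra.
  assert (Hq : 2 <= q) by nra.
  assert (3/4 * 2 <= p * q) by nra.
  nra.
Qed.

Theorem theorem7 (lam : R) (U P : C -> Prop) (f : C -> C) :
  0 < lam < 1 ->
  is_domain U ->
  meromorphic_on U P f ->
  (exists z1 z2, U z1 /\ ~ P z1 /\ U z2 /\ ~ P z2 /\ f z1 <> f z2) ->
  (forall z d, U z -> ~ P z ->
     is_derive (K := C_AbsRing) (V := C_NormedModule) f z d ->
     Cmult (RtoC 9) (Cmult (Cmult (f z) (f z)) (Cmult d d)) =
     Cmult (RtoC 2)
       (Cmult (Cminus (RtoC 1) (Cmult (f z) (f z)))
          (Cplus (Cminus (Cmult (RtoC 4) (Cmult (f z) (Cmult (f z) (f z))))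
                         (Cmult (RtoC 3) (f z)))
                 (RtoC (1 - 2 * lam ^ 2))))) ->
  forall z, U z -> ~ P z -> f z <> RtoC 0.
Proof.
  intros Hlam [HUo [HUc _]] [HP1 [HP2 [HP3 HP4]]] [z1 [z2 [Hz1 [Hnp1 [Hz2 [Hnp2 Hneq]]]]]] Hode z Hz Hnp Hfz.
  destruct (Req_dec (1 - 2 * lam ^ 2) 0) as [Hc0|Hc0].
  2:{ destruct (HP3 z Hz Hnp) as [d Hd].
      specialize (Hode z d Hz Hnp Hd). rewrite Hfz in Hode.
      assert (E : Cmult (RtoC 2) (Cmult (Cminus (RtoC 1) (Cmult (RtoC 0) (RtoC 0)))
          (Cplus (Cminus (Cmult (RtoC 4) (Cmult (RtoC 0) (Cmult (RtoC 0) (RtoC 0))))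
                         (Cmult (RtoC 3) (RtoC 0)))
                 (RtoC (1 - 2 * lam ^ 2)))) = Cmult (RtoC 2) (RtoC (1 - 2 * lam ^ 2))) by ring.
      rewrite E in Hode.
      replace (Cmult (RtoC 9) (Cmult (Cmult (RtoC 0) (RtoC 0)) (Cmult d d))) with (RtoC 0) in Hode by ring.
      apply (f_equal fst) in Hode. simpl in Hode. lra. }
  rewrite Hc0 in Hode.
  assert (Hnb : forall z0, U z0 -> ~ P z0 -> exists e, 0 < e /\
            forall w, Cmod (Cminus w z0) < e -> U w /\ ~ P w).
  { intros z0 Hz0 Hnp0.
    destruct (open_Cmod U z0 HUo Hz0) as [e1 [He1 HU1]].
    destruct (HP2 z0 Hz0) as [e2 [He2 HI]].
    exists (Rmin e1 e2). split; [apply Rmin_pos; auto|].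
    intros w Hw. split.
    - apply HU1. eapply Rlt_le_trans; [exact Hw|apply Rmin_l].
    - intro Pw. assert (w = z0).
      { apply HI; auto. eapply Rlt_le_trans; [exact Hw|apply Rmin_r]. }
      subst. auto. }
  assert (Hloc : forall z0, U z0 -> ~ P z0 -> f z0 = RtoC 0 ->
            exists r, 0 < r /\ forall w, Cmod (Cminus w z0) < r -> f w = RtoC 0).
  { intros z0 Hz0 Hnp0 Hf0.
    destruct (Hnb z0 Hz0 Hnp0) as [e [He Hew]].
    destruct (HP3 z0 Hz0 Hnp0) as [d0 Hd0].
    destruct (deriv_lip f z0 d0 Hd0) as [del [Hdel Hl]].
    set (C0 := Cmod d0 + 1).
    assert (HC0 : 0 < C0) by (unfold C0; assert (Hq := Cmod_ge_0 d0); lra).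
    set (r0 := Rmin (Rmin e del) (1 / (2 * C0))).
    assert (Hr0 : 0 < r0).
    { unfold r0. repeat apply Rmin_pos; auto. apply Rdiv_lt_0_compat; lra. }
    assert (Hr1 : r0 <= e) by (unfold r0; eapply Rle_trans; [apply Rmin_l|apply Rmin_l]).
    assert (Hr2 : r0 <= del) by (unfold r0; eapply Rle_trans; [apply Rmin_l|apply Rmin_r]).
    assert (Hr3 : r0 <= 1 / (2 * C0)) by (unfold r0; apply Rmin_r).
    assert (Hbd : forall w, Cmod (Cminus w z0) < r0 -> Cmod (f w) <= C0 * Cmod (Cminus w z0)).
    { intros w Hw. specialize (Hl w ltac:(lra)). rewrite Hf0 in Hl.
      replace (Cminus (f w) (RtoC 0)) with (f w) in Hl by ring. exact Hl. }
    assert (Hhalf : forall w, Cmod (Cminus w z0) < r0 -> Cmod (f w) <= 1/2).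
    { intros w Hw. eapply Rle_trans; [apply Hbd; auto|].
      assert (C0 * r0 <= 1/2).
      { apply Rmult_le_compat_l with (r := C0) in Hr3; [|lra].
        replace (C0 * (1 / (2 * C0))) with (1/2) in Hr3 by (field; lra). exact Hr3. }
      assert (Hq := Cmod_ge_0 (Cminus w z0)). nra. }
    apply (core f z0 r0 C0 Hr0 HC0).
    - intros w Hw. destruct (Hew w ltac:(lra)) as [Uw Pw].
      destruct (HP3 w Uw Pw) as [d Hd]. exists d. split; auto.
      intro Hfw. apply (ode_bound (f w) d Hfw (Hhalf w Hw) (Hode w d Uw Pw Hd)).
    - exact Hbd.
    - intros w Hw. specialize (Hhalf w Hw). lra. }
  set (A := fun z => exists e, 0 < e /\ forall w, Cmod (Cminus w z) < e -> f w = RtoC 0).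
  set (B := fun z => exists e, 0 < e /\ forall w, Cmod (Cminus w z) < e -> U w -> ~ P w -> f w <> RtoC 0).
  assert (Hcover : forall z, U z -> A z \/ B z).
  { intros z0 Hz0. destruct (classic (P z0)) as [Pz|Pz].
    - right. specialize (HP4 z0 Pz (fun y : R => 0 < y) (ex_intro _ 0 (fun x H => H))).
      destruct HP4 as [eps Heps].
      exists eps. split; [apply cond_pos|]. intros w Hw Uw Pw Hfw.
      assert (Hball : ball z0 eps w).
      { split.
        - change (Rabs (fst w - fst z0) < eps). rewrite <- fst_sub.
          eapply Rle_lt_trans; [apply Cmod_fst|exact Hw].
        - change (Rabs (snd w - snd z0) < eps). rewrite <- snd_sub.
          eapply Rle_lt_trans; [apply Cmod_snd|exact Hw]. }
      assert (Hne : w <> z0) by (intro E; subst; auto).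
      specialize (Heps w Hball Hne). simpl in Heps. rewrite Hfw, Cmod_0 in Heps. lra.
    - destruct (classic (f z0 = RtoC 0)) as [Hf0|Hf0].
      + left. destruct (Hloc z0 Hz0 Pz Hf0) as [r [Hr Hw]]. exists r. auto.
      + right. destruct (HP3 z0 Hz0 Pz) as [d Hd].
        destruct (deriv_lip f z0 d Hd) as [del [Hdel Hl]].
        assert (Hm : 0 < Cmod (f z0)) by (apply Cmod_gt_0; auto).
        assert (Hq := Cmod_ge_0 d).
        exists (Rmin del (Cmod (f z0) / (Cmod d + 2))). split.
        { apply Rmin_pos; auto. apply Rdiv_lt_0_compat; lra. }
        intros w Hw _ _ Hfw.
        assert (Hw1 : Cmod (Cminus w z0) < del) by (eapply Rlt_le_trans; [exact Hw|apply Rmin_l]).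
        assert (Hw2 : Cmod (Cminus w z0) < Cmod (f z0) / (Cmod d + 2))
          by (eapply Rlt_le_trans; [exact Hw|apply Rmin_r]).
        specialize (Hl w Hw1). rewrite Hfw in Hl.
        replace (Cminus (RtoC 0) (f z0)) with (Copp (f z0)) in Hl by ring.
        rewrite Cmod_opp in Hl.
        apply Rmult_lt_compat_r with (r := Cmod d + 2) in Hw2; [|lra].
        replace (Cmod (f z0) / (Cmod d + 2) * (Cmod d + 2)) with (Cmod (f z0)) in Hw2 by (field; lra).
        assert (Hq2 := Cmod_ge_0 (Cminus w z0)). nra. }
  assert (Hdisj : forall z, U z -> A z -> B z -> False).
  { intros z0 Hz0 [eA [HeA HA]] [eB [HeB HB]].
    assert (Hex : exists w, Cmod (Cminus w z0) < Rmin eA eB /\ U w /\ ~ P w).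
    { destruct (classic (P z0)) as [Pz|Pz].
      - destruct (open_Cmod U z0 HUo Hz0) as [e1 [He1 HU1]].
        destruct (HP2 z0 Hz0) as [e2 [He2 HI]].
        set (t := Rmin (Rmin eA eB) (Rmin e1 e2) / 2).
        assert (Ht0 : 0 < Rmin (Rmin eA eB) (Rmin e1 e2)) by (repeat apply Rmin_pos; auto).
        assert (Hta : Rmin (Rmin eA eB) (Rmin e1 e2) <= Rmin eA eB) by apply Rmin_l.
        assert (Htb : Rmin (Rmin eA eB) (Rmin e1 e2) <= Rmin e1 e2) by apply Rmin_r.
        assert (Hm1 : Rmin e1 e2 <= e1) by apply Rmin_l.
        assert (Hm2 : Rmin e1 e2 <= e2) by apply Rmin_r.
        exists (Cplus z0 (RtoC t)).
        assert (Hd : Cmod (Cminus (Cplus z0 (RtoC t)) z0) = t).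
        { replace (Cminus (Cplus z0 (RtoC t)) z0) with (RtoC t) by ring.
          rewrite Cmod_R. apply Rabs_right. unfold t; lra. }
        rewrite Hd. split; [unfold t; lra|]. split.
        + apply HU1. rewrite Hd. unfold t; lra.
        + intro Pw. assert (E : Cplus z0 (RtoC t) = z0) by (apply HI; auto; rewrite Hd; unfold t; lra).
          rewrite E in Hd. replace (Cminus z0 z0) with (RtoC 0) in Hd by ring.
          rewrite Cmod_0 in Hd. unfold t in Hd. lra.
      - exists z0. replace (Cminus z0 z0) with (RtoC 0) by ring. rewrite Cmod_0.
        split; [apply Rmin_pos; auto|auto]. }
    destruct Hex as [w [Hw [Uw Pw]]].
    apply (HB w); auto.
    - eapply Rlt_le_trans; [exact Hw|apply Rmin_r].
    - apply HA. eapply Rlt_le_trans; [exact Hw|apply Rmin_l]. }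
  assert (Hzero : forall w, Cmod (Cminus w w) = 0).
  { intro w. replace (Cminus w w) with (RtoC 0) by ring. apply Cmod_0. }
  destruct (HUc A B (open_nbhd _) (open_nbhd _) Hcover Hdisj) as [HA|HB].
  - destruct (HA z1 Hz1) as [e1 [He1 H1]]. destruct (HA z2 Hz2) as [e2 [He2 H2]].
    apply Hneq. rewrite (H1 z1), (H2 z2); auto; rewrite Hzero; auto.
  - destruct (HB z Hz) as [e [He H]]. apply (H z); auto. rewrite Hzero; auto.
Qed.
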